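(* Let $A$ be an abelian group of order $n$ whose $2$-Sylow subgroup is either non-cyclic or trivial. Then (a) $P_a\in\operatorname{SL}_n$ for every $a\in A$, and (b) $D_\chi\in\operatorname{SL}_n$ for every $\chi\in A^{\ast}$.
   Context: $k$ is an algebraically closed field of characteristic $0$, $A^{\ast}=\operatorname{Hom}(A,k^{\times})$ is the character group of $A$, and $V=k[A]$ is the group algebra of $A$, identified with $k^n$ via the basis $\{a : a\in A\}$, so $\operatorname{GL}(V)=\operatorname{GL}_n$. For $a\in A$, $P_a\in\operatorname{GL}(V)$ is defined by $P_a(\sum_{b\in A}c_b b)=\sum_{b\in A}c_b\, ab$; for $\chi\in A^{\ast}$, $D_\chi\in\operatorname{GL}(V)$ is defined by $D_\chi(\sum_{a\in A}c_a a)=\sum_{a\in A}c_a\chi(a)\,a$ ($c_a,c_b\in k$). *)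

(* Defs.v *)
From HB Require Import structures.
From mathcomp Require Import all_boot all_order all_algebra all_fingroup all_solvable.
Set Implicit Arguments. Unset Strict Implicit. Unset Printing Implicit Defensive.
Import GRing.Theory.
Local Open Scope ring_scope.

(* The finite abelian group A is the whole carrier of gT; V = k[A] = k^n with
   n = #|gT|, basis vectors indexed by 'I_n via enum_val (basis e_i <-> enum_val i). *)

Definition is_character (k : fieldType) (gT : finGroupType) (chi : gT -> k) : Prop :=
  (forall x, chi x != 0) /\ (forall x y, chi (x * y)%g = chi x * chi y).

(* P_a : sum c_b b |-> sum c_b (a b); column j (basis vector b = enum_val j)
   is the basis vector a*b. *)
Definition Pmx (k : fieldType) (gT : finGroupType) (a : gT) : 'M[k]_#|gT| :=
  \matrix_(i, j) ((enum_val i == (a * enum_val j)%g)%:R).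

Definition Dmx (k : fieldType) (gT : finGroupType) (chi : gT -> k) : 'M[k]_#|gT| :=
  \matrix_(i, j) ((i == j)%:R * chi (enum_val j)).

Definition inSL (k : fieldType) (n : nat) (M : 'M[k]_n) : Prop := \det M = 1.

(* Main.v *)
Require Import Defs.
From HB Require Import structures.
From mathcomp Require Import all_boot all_order all_algebra all_fingroup all_solvable.
Set Implicit Arguments. Unset Strict Implicit. Unset Printing Implicit Defensive.
Import GRing.Theory.
Local Open Scope ring_scope.
Local Close Scope ring_scope.
Section PartA.
Variables (gT : finGroupType) (a : gT).

Definition tf (j : 'I_#|gT|) : 'I_#|gT| := enum_rank (a * enum_val j)%g.
Lemma tf_inj : injective tf.
Proof. by move=> i j /enum_rank_inj /mulgI /enum_val_inj. Qed.
Definition ts : {perm 'I_#|gT|} := perm tf_inj.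

Lemma tsX i j : (ts ^+ i)%g j = enum_rank (a ^+ i * enum_val j)%g.
Proof.
elim: i j => [|i IH] j; first by rewrite expg0 perm1 mul1g enum_valK.
rewrite [(ts ^+ _)%g]expgS permM IH permE /tf enum_rankK.
by rewrite [(a ^+ i.+1)%g]expgSr mulgA.
Qed.

Lemma ts_free i j : (ts ^+ i)%g j = j -> (ts ^+ i)%g = 1%g.
Proof.
rewrite tsX => e.
have e1 : (a ^+ i * enum_val j = enum_val j)%g by apply: enum_rank_inj; rewrite e enum_valK.
have ai : (a ^+ i = 1)%g by apply: (mulIg (enum_val j)); rewrite mul1g.
by apply/permP => l; rewrite tsX perm1 ai mul1g enum_valK.
Qed.

Lemma order_ts : #[ts]%g = #[a]%g.
Proof.
apply/eqP; rewrite eqn_dvd; apply/andP; split.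
  rewrite order_dvdn; apply/eqP/permP => l.
  by rewrite tsX perm1 expg_order mul1g enum_valK.
have j : 'I_#|gT| := enum_rank 1%g.
rewrite order_dvdn; apply/eqP.
have := congr1 (fun p : {perm _} => p j) (expg_order ts).
rewrite /= tsX perm1 => e.
have e1 : (a ^+ #[ts] * enum_val j = enum_val j)%g by apply: enum_rank_inj; rewrite e enum_valK.
by apply: (mulIg (enum_val j)); rewrite mul1g.
Qed.

Lemma card_porbits : #|gT| = (#|porbits ts| * #[a]%g)%N.
Proof.
have ->: porbits ts = orbit 'P <[ts]> @: [set: 'I_#|gT|].
  rewrite /porbits porbitE; apply/setP => X; apply/imsetP/imsetP => [][x _ ->]; by exists x.
rewrite -{1}(card_ord #|gT|) -cardsT.
apply: card_uniform_partition; last first.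
  apply: orbit_partition; apply/actsP => u _ x; by rewrite !inE.
move=> X /imsetP [x _ ->].
have := card_orbit_stab 'P <[ts]> x.
have -> : #|('C_<[ts]>[x | 'P])%g| = 1%N.
  apply/eqP; rewrite -trivg_card1 -subG1; apply/subsetP => u.
  rewrite inE => /andP [/cycleP [i ->]] /astab1P /= e.
  by rewrite inE (ts_free e).
by rewrite muln1 -orderE order_ts.
Qed.


Lemma ts_even :
  (forall S : {group gT}, (S \in 'Syl_2([set: gT]))%g -> ~~ cyclic S \/ S = 1%G) ->
  odd_perm ts = false.
Proof.
move=> hS; rewrite /odd_perm card_ord.
set q := #|porbits ts|; set m := #[a]%g.
have e := card_porbits; rewrite -/q -/m in e.
rewrite e oddM.
case om: (odd m); first by rewrite andbT addbb.
rewrite andbF /=; apply/negP => oq.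
have m0 : (0 < m)%N by exact: order_gt0.
have q0 : (0 < q)%N by case: q oq {e}.
pose P := 'O_(2%N)(<[a]>)%G.
have nilA : nilpotent <[a]>%g := abelian_nil (cycle_abelian a).
have cP : #|P| = m`_2 by rewrite (card_Hall (nilpotent_pcore_Hall 2%N nilA)).
have PS : (P \in 'Syl_2([set: gT]))%g.
  rewrite inE pHallE subsetT cP cardsT e partnM // (@part_p'nat 2%N q) ?mul1n ?eqxx //.
  by rewrite p'natE // dvdn2 oq.
case: (hS P PS) => [|P1].
  by rewrite (cyclicS (pcore_sub _ _) (cycle_cyclic a)).
have : m`_2 == 1%N by rewrite -cP P1 cards1.
by rewrite partn_eq1 // p'natE // dvdn2 om.
Qed.

End PartA.
Local Open Scope ring_scope.
Section PartB.
Variables (k : fieldType) (gT : finGroupType) (chi : gT -> k).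
Hypothesis chiC : is_character chi.

Definition Qp (X : {set gT}) := \prod_(x in X) chi x.

Lemma chi_neq0 x : chi x != 0. Proof. by case: chiC. Qed.
Lemma chiM x y : chi (x * y)%g = chi x * chi y. Proof. by case: chiC. Qed.

Lemma chi1 : chi 1%g = 1.
Proof.
have := chiM 1%g 1%g; rewrite mulg1 => h.
by apply: (mulfI (chi_neq0 1%g)); rewrite mulr1 -h.
Qed.

Lemma chiV x : chi (x^-1)%g = (chi x)^-1.
Proof.
have h : chi x * chi (x^-1)%g = 1 by rewrite -chiM mulgV chi1.
by rewrite -[RHS]mulr1 -h mulKf // chi_neq0.
Qed.

Lemma chiX x m : chi (x ^+ m)%g = chi x ^+ m.
Proof. by elim: m => [|m IH]; rewrite ?chi1 // expgS exprS chiM IH. Qed.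

Lemma Qp_neq0 X : Qp X != 0.
Proof. by apply/prodf_neq0 => x _; exact: chi_neq0. Qed.

Lemma Qp_sqr (H : {group gT}) : Qp H ^+ 2 = 1.
Proof.
have e : Qp H = (Qp H)^-1.
  rewrite /Qp [LHS](reindex_inj (@invg_inj gT)) /=.
  rewrite [LHS](eq_bigl (fun x => x \in H)); last by move=> x; rewrite /= groupV.
  by rewrite -prodfV; apply: eq_bigr => x _; rewrite chiV.
by rewrite expr2 {1}e mulVf // Qp_neq0.
Qed.

Lemma Qp_card (H : {group gT}) : Qp H ^+ #|H| = 1.
Proof.
rewrite /Qp -prodrXl; apply: big1 => x Hx.
by rewrite -chiX expg_cardG // chi1.
Qed.

Lemma Qp_odd (H : {group gT}) : odd #|H| -> Qp H = 1.
Proof.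
move=> oH; have := Qp_card H; rewrite -(odd_double_half #|H|) oH.
by rewrite exprD expr1 -muln2 mulnC exprM Qp_sqr expr1n mulr1.
Qed.

Lemma Qp_even (H : {group gT}) n : ~~ odd n -> Qp H ^+ n = 1.
Proof.
move=> en; rewrite -(odd_double_half n) (negbTE en) add0n.
by rewrite -muln2 mulnC exprM Qp_sqr expr1n.
Qed.

Lemma Qp_dprod (H K G : {group gT}) :
  (H \x K)%g = G -> Qp G = Qp H ^+ #|K| * Qp K ^+ #|H|.
Proof.
move=> /dprodP [_ defG cHK tiHK].
have inj : {in setX H K &, injective mulgm}.
  move=> [h1 k1] [h2 k2]; rewrite !in_setX /= => /andP[h1H k1K] /andP[h2H k2K].
  rewrite /mulgm /= => e.
  have e2 : (h2^-1 * h1 = k2 * k1^-1)%g.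
    by rewrite -[h1](mulgK k1) e -mulgA mulKg.
  have : (h2^-1 * h1)%g \in H :&: K.
    by rewrite inE groupM ?groupV //= e2 groupM ?groupV.
  rewrite tiHK inE => /eqP e1.
  have -> : h1 = h2 by apply/eqP; rewrite -(mulKVg h2 h1) e1 mulg1.
  have : (k2 * k1^-1 = 1)%g by rewrite -e2 e1.
  by move/(canRL (mulgKV k1)); rewrite mul1g => ->.
rewrite /Qp -defG -imset_mulgm big_imset //=.
have pb : \prod_(h in H) \prod_(k in K) chi (h * k)%g =
   \prod_(p | (p.1 \in H) && (p.2 \in K)) chi (p.1 * p.2)%g.
  exact: (pair_big_dep (fun h => h \in H) (fun _ k => k \in K) (fun h k => chi (h * k)%g)).
rewrite (eq_bigl (fun p => (p.1 \in H) && (p.2 \in K))); last by case=> ? ?; rewrite in_setX.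
rewrite (eq_bigr (fun p => chi (p.1 * p.2)%g)); last by case.
rewrite -pb.
under eq_bigr => h _ do under eq_bigr => y _ do rewrite chiM.
under eq_bigr => h _ do rewrite big_split /= prodr_const.
by rewrite big_split /= prodr_const prodrXl.
Qed.


Lemma Qp_even2 (X S : {group gT}) (C : {group gT}) :
  (2.-group S)%g -> C \subset S -> (C :!=: 1)%g -> Qp X ^+ #|C| = 1.
Proof.
move=> pS sCS ntC; apply: Qp_even.
have [_ d2 _] := pgroup_pdiv (pgroupS sCS pS) ntC.
by rewrite -dvdn2.
Qed.

Lemma Qp_noncyclic (S : {group gT}) :
  abelian S -> (2.-group S)%g -> ~~ cyclic S -> Qp S = 1.
Proof.
move=> cSS pS ncS.
have [x Sx ex] := exponent_witness (abelian_nil cSS).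
have /splitsP [D /complP [tiD defS]] := abelian_splits Sx (esym ex) cSS.
have sxS : (<[x]> \subset S)%g by rewrite cycle_subG.
have sDS : D \subset S by rewrite -defS mulG_subr.
have dp : (<[x]> \x D)%g = S.
  by rewrite dprodE // (sub_abelian_cent2 cSS).
have ntx : (<[x]>%G :!=: 1)%g.
  apply: contra ncS => /eqP x1.
  have : (S :==: 1)%g.
    by rewrite trivg_exponent ex orderE; move: x1 => /= ->; rewrite cards1.
  by move/eqP ->; rewrite cyclic1.
have ntD : (D :!=: 1)%g.
  apply: contra ncS => /eqP D1.
  by rewrite -defS D1 mulg1 cycle_cyclic.
rewrite (Qp_dprod dp).
rewrite (Qp_even2 _ pS sDS ntD).
by rewrite (Qp_even2 _ pS sxS ntx) mulr1.
Qed.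

Lemma Qp_all :
  abelian [set: gT] ->
  (forall S : {group gT}, (S \in 'Syl_2([set: gT]))%g -> ~~ cyclic S \/ S = 1%G) ->
  Qp [set: gT] = 1.
Proof.
move=> cGG hS.
have nilG := abelian_nil cGG.
have dp := nilpotent_pcoreC 2%N nilG.
rewrite (Qp_dprod dp).
have oT : odd #|'O_(2%N)^'([set: gT])%g|.
  have := pcore_pgroup (2%N)^' [set: gT]%G.
  by rewrite /pgroup p'natE // dvdn2 negbK.
rewrite (Qp_odd oT) expr1n mulr1.
have HS := nilpotent_pcore_Hall 2%N nilG.
have cS : abelian 'O_(2%N)([set: gT])%g := abelianS (subsetT _) cGG.
case: (hS 'O_(2%N)([set: gT])%G); first by rewrite inE.
  by move=> ncS; rewrite (Qp_noncyclic cS (pcore_pgroup _ _) ncS) expr1n.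
by move=> ->; rewrite /Qp /= big_set1 chi1 expr1n.
Qed.

End PartB.

Lemma Pmx_tr (k : fieldType) (gT : finGroupType) (a : gT) :
  Pmx k a = (perm_mx (ts a))^T.
Proof.
apply/matrixP => i j; rewrite !mxE permE /tf.
have -> : (enum_rank (a * enum_val j)%g == i) = (enum_val i == (a * enum_val j)%g) => //.
by apply/eqP/eqP => [<-|<-]; rewrite ?enum_rankK ?enum_valK.
Qed.

Theorem lemma8p9 (k : closedFieldType) (gT : finGroupType) :
  [pchar k] =i pred0 ->
  abelian [set: gT] ->
  (forall S : {group gT}, (S \in 'Syl_2([set: gT]))%g ->
     ~~ cyclic S \/ S = 1%G) ->
  (forall a : gT, inSL (Pmx k a)) /\
  (forall chi : gT -> k, is_character chi -> inSL (Dmx chi)).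
Proof.
move=> _ cGG hS; split.
  move=> a; rewrite /inSL Pmx_tr det_tr det_perm ts_even //.
move=> chi hc; rewrite /inSL.
have -> : Dmx chi = diag_mx (\row_j chi (enum_val j)).
  apply/matrixP => i j; rewrite !mxE.
  by case: eqP => [->|_]; rewrite ?mul1r ?mul0r ?mulr1n ?mulr0n.
rewrite det_diag.
transitivity (Qp chi [set: gT]); last exact: Qp_all hc cGG hS.
rewrite /Qp [RHS](eq_bigl xpredT); last by move=> x; rewrite inE.
rewrite [RHS](reindex (@enum_val gT (mem gT))) /=.
  by apply: eq_bigr => i _; rewrite mxE.
by exists enum_rank => x _; rewrite ?enum_valK ?enum_rankK.
Qed.
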